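(* Let $G=(V,E)$ be a finite simple graph and let $\mathcal{X}=(X_i)_{i=1}^n$ be a sequence of subsets of $V$. Then $\mathcal{X}$ is a measurement schedule on the graph state $|G\rangle$ if and only if $\mathcal{X}$ is a path decomposition of $G$.
   Context: The graph state of $G$ is $|G\rangle=\left(\prod_{e\in E} CZ_e\right)|+\rangle^{\otimes V}$, with one qubit per vertex. A measurement schedule on $|G\rangle$ is a process of initialising and measuring the qubits (vertices), represented by the sequence $(X_i)_{i=1}^n$ where $X_i\subseteq V$ is the set of qubits that are active (initialised but not yet measured) at step $i$. It must satisfy: (M1) each qubit is initialised exactly once (so every $v\in V$ lies in some $X_i$, and the set of steps at which $v$ is active is a single contiguous block of indices, after which $v$ is measured and never active again); (M2) a qubit is measured only after all of its neighbouring qubits have been initialised (i.e. if $j$ is the last index with $v\in X_j$, then every neighbour $u$ of $v$ lies in some $X_i$ with $i\le j$). A path decomposition of $G$ is a sequence $(X_i)_{i=1}^n$ of subsets of $V$ such that: (P1) every $v\in V$ lies in some $X_i$; (P2) for every edge $e\in E$ there is an $i$ with $e\subseteq X_i$; (P3) for all $i\le j\le k$, if $v\in X_i\cap X_k$ then $v\in X_j$. *)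

(* Defs.v *)
(* A sequence of subsets
   (X_i)_{i=1}^n is a list X : seq {set V}; index i (1-based in the paper)
   corresponds to position i-1 in the list, i.e. nth set0 X (i-1). *)
From mathcomp Require Import all_boot.
Set Implicit Arguments. Unset Strict Implicit. Unset Printing Implicit Defensive.

Section Defs.
Variable V : finType.

Definition bag (X : seq {set V}) (i : nat) : {set V} := nth set0 X i.

Definition covers_vertices (X : seq {set V}) : Prop :=
  forall v : V, exists2 i, i < size X & v \in bag X i.

Definition contiguous (X : seq {set V}) : Prop :=
  forall (v : V) (i j k : nat), i <= j -> j <= k -> k < size X ->
    v \in bag X i -> v \in bag X k -> v \in bag X j.

Definition last_active (X : seq {set V}) (v : V) (j : nat) : Prop :=
  [/\ j < size X, v \in bag X j &
      forall k, j < k -> k < size X -> v \notin bag X k].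

Definition measurement_schedule (e : rel V) (X : seq {set V}) : Prop :=
  [/\ covers_vertices X, contiguous X &
      forall (v : V) (j : nat), last_active X v j ->
        forall u : V, e v u -> exists2 i, i <= j & u \in bag X i].

Definition path_decomposition (e : rel V) (X : seq {set V}) : Prop :=
  [/\ covers_vertices X,
      (forall u v : V, e u v ->
         exists2 i, i < size X & (u \in bag X i) && (v \in bag X i)) &
      contiguous X].
End Defs.

(* Main.v *)
Require Import Defs.
From mathcomp Require Import all_boot.

Lemma last_exists (V : finType) (X : seq {set V}) (v : V) i :
  i < size X -> v \in bag X i -> exists j, last_active X v j.
Proof.
move=> Hi Hv.
have ex : exists n, (n < size X) && (v \in bag X n) by exists i; rewrite Hi Hv.
have bd : forall n, (n < size X) && (v \in bag X n) -> n <= size X.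
  by move=> n /andP[/ltnW].
case: (ex_maxnP ex bd) => j /andP[Hj Hvj] Hmax.
exists j; split=> // k Hjk Hk; apply/negP => Hvk.
have := Hmax k; rewrite Hk Hvk => /(_ isT); rewrite leqNgt Hjk.
done.
Qed.

Theorem theorem1 (V : finType) (e : rel V)
    (e_sym : symmetric e) (e_irr : irreflexive e) (X : seq {set V}) :
  measurement_schedule e X <-> path_decomposition e X.
Proof.
split.
- case=> Hcov Hcont HM; split=> // u v Euv.
  have [iu Hiu Hu] := Hcov u; have [iv Hiv Hv] := Hcov v.
  have [ju [Hju Huj Hlu]] := @last_exists V X u iu Hiu Hu.
  have [jv [Hjv Hvj Hlv]] := @last_exists V X v iv Hiv Hv.
  have [i Hi Hui] := HM v jv (And3 Hjv Hvj Hlv) u ltac:(by rewrite e_sym).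
  have [i' Hi' Hvi'] := HM u ju (And3 Hju Huj Hlu) v Euv.
  have Hiju : i <= ju.
    rewrite leqNgt; apply/negP => H; move: (Hlu i H (leq_ltn_trans Hi Hjv)).
    by rewrite Hui.
  have Hi'jv : i' <= jv.
    rewrite leqNgt; apply/negP => H; move: (Hlv i' H (leq_ltn_trans Hi' Hju)).
    by rewrite Hvi'.
  exists (maxn i i').
    by rewrite gtn_max (leq_ltn_trans Hi Hjv) (leq_ltn_trans Hi' Hju).
  apply/andP; split.
  + apply: (Hcont u i _ ju) => //; first exact: leq_maxl.
    by rewrite geq_max Hiju.
  + apply: (Hcont v i' _ jv) => //; first exact: leq_maxr.
    by rewrite geq_max Hi'jv Hi.
- case=> Hcov Hedge Hcont; split=> // v j [Hj Hvj Hl] u Evu.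
  have [i Hi /andP[Hvi Hui]] := Hedge v u Evu.
  exists i => //.
  rewrite leqNgt; apply/negP => H; move: (Hl i H Hi); by rewrite Hvi.
Qed.
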